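(* Let $(f,\bar f_0,\bar f_1):A\to B$ be a bipointed morphism. Then the canonical function $\pi_f:\mathsf{isbipequiv}(f,\bar f_0,\bar f_1)\to\mathsf{isequiv}(f)$ is an equivalence of types. Here $\pi_f$ sends $((g,\bar g_0,\bar g_1),p,(h,\bar h_0,\bar h_1),q)$ to the element of $\mathsf{isequiv}(f)$ obtained from $g,h:B\to A$ and the paths $\mathsf{Id}(g\circ f,1_A)$, $\mathsf{Id}(f\circ h,1_B)$ given by the first components of $p$ and $q$ (under the characterization of paths in $\Sigma$-types), via the standard equivalence $\mathsf{isequiv}(f)\simeq(\Sigma g:B\to A)\mathsf{Id}(g\circ f,1_A)\times(\Sigma h:B\to A)\mathsf{Id}(f\circ h,1_B)$. In particular, a bipointed morphism is a bipointed equivalence if and only if its underlying function is an equivalence.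
   Context: We work in the intensional Martin-Löf type theory $\mathcal H$ ($\Sigma$, $\Pi$, identity types, a universe $\mathsf U$ à la Russell closed under these, judgemental $\eta$ for $\Pi$, function extensionality; no identity reflection, K or UIP). For paths $p:\mathsf{Id}(a,b)$, $q:\mathsf{Id}(b,c)$, $q\cdot p:\mathsf{Id}(a,c)$ is their composite, $1_a=\mathsf{refl}(a)$, and $h\circ p$ is the action of a function $h$ on $p$. $\mathsf{iscontr}(X)=(\Sigma x:X)(\Pi y:X)\mathsf{Id}_X(x,y)$; $\mathsf{isequiv}(f)=(\Pi y:B)\mathsf{iscontr}((\Sigma x:A)\mathsf{Id}(fx,y))$. A bipointed type is a triple $(A,a_0,a_1)$ with $a_0,a_1:A$. For bipointed types $A=(A,a_0,a_1)$, $B=(B,b_0,b_1)$, a bipointed morphism is $(f,\bar f_0,\bar f_1)$ with $f:A\to B$, $\bar f_k:\mathsf{Id}(fa_k,b_k)$; $\mathsf{Bip}(A,B)$ is their type. The composite of $(f,\bar f_0,\bar f_1):A\to B$ and $(g,\bar g_0,\bar g_1):B\to C$ is $(g\circ f,\ \bar g_0\cdot(g\circ\bar f_0),\ \bar g_1\cdot(g\circ\bar f_1))$; the identity is $1_A=(\lambda x.x,1_{a_0},1_{a_1})$. For $f:\mathsf{Bip}(A,B)$, $\mathsf{isbipequiv}(f)=(\Sigma g:\mathsf{Bip}(B,A))\mathsf{Id}_{\mathsf{Bip}(A,A)}(g\circ f,1_A)\times(\Sigma h:\mathsf{Bip}(B,A))\mathsf{Id}_{\mathsf{Bip}(B,B)}(f\circ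 h,1_B)$. *)

(* Defs.v *)
(** Identity types (Type-valued, so no UIP/K is available). *)
Inductive Id {A : Type} (a : A) : A -> Type := refl : Id a a.
Arguments refl {A a}, {A} a.

(** [concat p q] is the composite "q . p" of the paper (first p, then q). *)
Definition concat {A : Type} {x y z : A} (p : Id x y) (q : Id y z) : Id x z :=
  match q in Id _ z return Id x z with refl => p end.

Definition inv {A : Type} {x y : A} (p : Id x y) : Id y x :=
  match p in Id _ y return Id y x with refl => refl end.

Definition ap {A B : Type} (h : A -> B) {x y : A} (p : Id x y) : Id (h x) (h y) :=
  match p in Id _ y return Id (h x) (h y) with refl => refl end.

Definition iscontr (X : Type) : Type := { x : X & forall y : X, Id x y }.

Definition fib {A B : Type} (f : A -> B) (y : B) : Type := { x : A & Id (f x) y }.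

Definition isequiv {A B : Type} (f : A -> B) : Type := forall y : B, iscontr (fib f y).

Definition happly {X : Type} {P : X -> Type} {u v : forall x, P x} (p : Id u v)
  : forall x, Id (u x) (v x) :=
  fun x => match p in Id _ v return Id (u x) (v x) with refl => refl end.

Definition Funext : Type :=
  forall (X : Type) (P : X -> Type) (u v : forall x, P x), isequiv (@happly X P u v).

Record BipType : Type := { bcar :> Type; bpt0 : bcar; bpt1 : bcar }.

Definition Bip (A B : BipType) : Type :=
  { f : A -> B & (Id (f (bpt0 A)) (bpt0 B) * Id (f (bpt1 A)) (bpt1 B))%type }.

Definition bcomp {A B C : BipType} (g : Bip B C) (f : Bip A B) : Bip A C :=
  existT _ (fun x => projT1 g (projT1 f x))
    (concat (ap (projT1 g) (fst (projT2 f))) (fst (projT2 g)),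
     concat (ap (projT1 g) (snd (projT2 f))) (snd (projT2 g))).

Definition bid (A : BipType) : Bip A A := existT _ (fun x => x) (refl, refl).

Definition isbipequiv {A B : BipType} (f : Bip A B) : Type :=
  ({ g : Bip B A & Id (bcomp g f) (bid A) } *
   { h : Bip B A & Id (bcomp f h) (bid B) })%type.

Definition biinv {A B : Type} (f : A -> B) : Type :=
  ({ g : B -> A & Id (fun x => g (f x)) (fun x => x) } *
   { h : B -> A & Id (fun y => f (h y)) (fun y => y) })%type.

Definition bip_to_biinv {A B : BipType} (f : Bip A B) (e : isbipequiv f)
  : biinv (projT1 f) :=
  (existT (fun g : B -> A => Id (fun x => g (projT1 f x)) (fun x => x))
      (projT1 (projT1 (fst e))) (ap (@projT1 _ _) (projT2 (fst e))),
   existT (fun h : B -> A => Id (fun y => projT1 f (h y)) (fun y => y))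
      (projT1 (projT1 (snd e))) (ap (@projT1 _ _) (projT2 (snd e)))).

(** The standard map biinv f -> isequiv f (via quasi-inverse and adjointification). *)
Lemma concat_1p {A} {x y : A} (p : Id x y) : concat refl p = p.
Proof. destruct p; reflexivity. Qed.
Lemma concat_assoc {A} {x y z w : A} (p : Id x y) (q : Id y z) (r : Id z w) :
  concat p (concat q r) = concat (concat p q) r.
Proof. destruct r; reflexivity. Qed.
Lemma concat_Vp {A} {x y : A} (p : Id x y) : concat (inv p) p = refl.
Proof. destruct p; reflexivity. Qed.
Lemma ap_compose {A B C} (h : A -> B) (k : B -> C) {x y : A} (p : Id x y) :
  ap k (ap h p) = ap (fun x => k (h x)) p.
Proof. destruct p; reflexivity. Qed.
Lemma ap_idmap {A} {x y : A} (p : Id x y) : ap (fun x => x) p = p.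
Proof. destruct p; reflexivity. Qed.
Lemma natural {A B} {u v : A -> B} (H : forall x, Id (u x) (v x)) {x y : A} (r : Id x y) :
  concat (ap u r) (H y) = concat (H x) (ap v r).
Proof. destruct r; simpl; apply concat_1p. Qed.
Lemma cancel_r {A} {x y z : A} (p q : Id x y) (r : Id y z) :
  concat p r = concat q r -> p = q.
Proof. destruct r; simpl; trivial. Qed.
Lemma homotopy_ap {A} (k : A -> A) (H : forall x, Id (k x) x) (x : A) :
  ap k (H x) = H (k x).
Proof.
  pose proof (natural H (H x)) as E. rewrite ap_idmap in E.
  exact (cancel_r _ _ _ E).
Qed.

Section Adjointify.
Context {A B : Type} (f : A -> B) (g : B -> A)
  (eta : forall a, Id (g (f a)) a) (eps : forall b, Id (f (g b)) b).

Definition eps' (b : B) : Id (f (g b)) b :=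
  concat (inv (eps (f (g b)))) (concat (ap f (eta (g b))) (eps b)).

Lemma tau (a : A) : eps' (f a) = ap f (eta a).
Proof.
  unfold eps'.
  rewrite <- (homotopy_ap (fun x => g (f x)) eta a).
  assert (E : ap f (ap (fun x => g (f x)) (eta a))
              = ap (fun y => f (g y)) (ap f (eta a))).
  { transitivity (ap (fun x => f (g (f x))) (eta a)).
    - exact (ap_compose (fun x => g (f x)) f (eta a)).
    - symmetry. exact (ap_compose f (fun y => f (g y)) (eta a)). }
  rewrite E.
  rewrite (natural (u := fun y => f (g y)) (v := fun y => y) eps (ap f (eta a))).
  rewrite ap_idmap, concat_assoc, concat_Vp. apply concat_1p.
Qed.

Lemma path_fib {y : B} (x x' : A) (p : Id (f x) y) (p' : Id (f x') y)
  (e : Id x x') (H : concat (ap f e) p' = p) :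
  Id (existT (fun z => Id (f z) y) x p) (existT _ x' p').
Proof. destruct e. change (concat refl p' = p) in H. rewrite concat_1p in H. destruct H. exact refl. Defined.

Definition qinv_isequiv : isequiv f.
Proof.
  intro y. exists (existT _ (g y) (eps' y)).
  intros [x p]. destruct p.
  apply (path_fib _ _ _ _ (eta x)).
  symmetry. apply tau.
Defined.
End Adjointify.

Definition biinv_isequiv {A B : Type} (f : A -> B) (b : biinv f) : isequiv f.
Proof.
  destruct b as [[g p] [h q]].
  pose (gh := fun y => concat (ap g (inv (happly q y))) (happly p (h y))).
  exact (qinv_isequiv f g (happly p) (fun y => concat (ap f (gh y)) (happly q y))).
Defined.

Definition pi_map {A B : BipType} (f : Bip A B) (e : isbipequiv f) : isequiv (projT1 f) :=
  biinv_isequiv (projT1 f) (bip_to_biinv f e).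

(* Main.v *)
Require Import Defs.

Lemma Id_eq {X} {x y : X} : Id x y -> x = y.
Proof. intros []; reflexivity. Defined.
Lemma eq_Id {X} {x y : X} : x = y -> Id x y.
Proof. intros []; exact refl. Defined.

Lemma ap_concat {X Y} (h : X -> Y) {x y z : X} (p : Id x y) (q : Id y z) :
  ap h (concat p q) = concat (ap h p) (ap h q).
Proof. destruct q; reflexivity. Qed.

Definition fx (funext : Funext) {X Y} {u v : X -> Y} (H : forall x, Id (u x) (v x)) : Id u v :=
  projT1 (projT1 (funext X (fun _ => Y) u v H)).
Lemma fx_beta (funext : Funext) {X Y} {u v : X -> Y} (H : forall x, Id (u x) (v x)) :
  happly (fx funext H) = H.
Proof. exact (Id_eq (projT2 (projT1 (funext X (fun _ => Y) u v H)))). Qed.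

Lemma path_Bip {A B : BipType} (u v : Bip A B) (p : Id (projT1 u) (projT1 v))
  (E0 : fst (projT2 u) = concat (happly p (bpt0 A)) (fst (projT2 v)))
  (E1 : snd (projT2 u) = concat (happly p (bpt1 A)) (snd (projT2 v))) : Id u v.
Proof.
  destruct u as [k [k0 k1]], v as [k' [k0' k1']]; simpl in *.
  destruct p. simpl in E0, E1. rewrite ?concat_1p in E0. rewrite ?concat_1p in E1. subst. exact refl.
Qed.

Lemma path_Bip_H (funext : Funext) {A B : BipType} (u v : Bip A B)
  (H : forall x, Id (projT1 u x) (projT1 v x))
  (E0 : fst (projT2 u) = concat (H (bpt0 A)) (fst (projT2 v)))
  (E1 : snd (projT2 u) = concat (H (bpt1 A)) (snd (projT2 v))) : Id u v.
Proof.
  apply (path_Bip u v (fx funext H)); rewrite fx_beta; assumption.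
Qed.

Definition isProp (X : Type) := forall x y : X, Id x y.

Lemma prop_paths {X} (P : isProp X) (x y : X) : iscontr (Id x y).
Proof.
  exists (concat (inv (P x x)) (P x y)).
  intro p. destruct p. apply eq_Id. apply concat_Vp.
Qed.

Lemma contr_prop {X} (c : iscontr X) : isProp X.
Proof. destruct c as [c h]. intros x y. exact (concat (inv (h x)) (h y)). Qed.

Lemma pi_prop (funext : Funext) {X} {P : X -> Type} (H : forall x, isProp (P x)) :
  isProp (forall x, P x).
Proof.
  intros u v. exact (projT1 (projT1 (funext X P u v (fun x => H x (u x) (v x))))).
Qed.

Lemma iscontr_prop (funext : Funext) (X : Type) : isProp (iscontr X).
Proof.
  intros c c'.
  pose proof (contr_prop c) as PX.
  destruct c as [c h], c' as [c' h'].
  revert h'. destruct (h c'). intro h'.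
  assert (E : Id h h').
  { apply (pi_prop funext). intro y. apply contr_prop. apply prop_paths. exact PX. }
  destruct E. exact refl.
Qed.

Lemma isequiv_prop (funext : Funext) {X Y} (f : X -> Y) : isProp (isequiv f).
Proof. apply (pi_prop funext). intro y. apply iscontr_prop. exact funext. Qed.

Lemma contr_sigma {X} {P : X -> Type} (cX : iscontr X) (cP : forall x, iscontr (P x)) :
  iscontr {x : X & P x}.
Proof.
  destruct cX as [c h].
  exists (existT _ c (projT1 (cP c))).
  intros [x p]. destruct (h x).
  destruct (projT2 (cP c) p). exact refl.
Qed.

Lemma contr_prod {X Y} (cX : iscontr X) (cY : iscontr Y) : iscontr (X * Y).
Proof.
  destruct cX as [x h], cY as [y k].
  exists (x, y). intros [x' y']. destruct (h x'), (k y'). exact refl.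
Qed.

Definition einv {X Y} {f : X -> Y} (e : isequiv f) (b : Y) : X := projT1 (projT1 (e b)).
Definition eeps {X Y} {f : X -> Y} (e : isequiv f) (b : Y) : Id (f (einv e b)) b :=
  projT2 (projT1 (e b)).
Definition eeta {X Y} {f : X -> Y} (e : isequiv f) (a : X) : Id (einv e (f a)) a :=
  ap (@projT1 X (fun x => Id (f x) (f a))) (projT2 (e (f a)) (existT _ a refl)).

Lemma contr_bipequiv (funext : Funext) (A : Type) (a0 a1 : A) (B : Type) (f : A -> B)
  (e : isequiv f) :
  iscontr (isbipequiv (A := {| bcar := A; bpt0 := a0; bpt1 := a1 |})
                      (B := {| bcar := B; bpt0 := f a0; bpt1 := f a1 |})
                      (existT _ f (refl, refl))).
Proof.
  set (AA := {| bcar := A; bpt0 := a0; bpt1 := a1 |}).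
  set (BB := {| bcar := B; bpt0 := f a0; bpt1 := f a1 |}).
  set (F := (existT _ f (refl, refl)) : Bip AA BB).
  set (g := einv e). set (eta := eeta e).
  set (eps := eps' f g eta (eeps e)).
  assert (tau' : forall a, eps (f a) = ap f (eta a)) by (intro; apply tau).
  apply contr_prod.
  - pose (Phi := fun h : Bip BB AA => bcomp h F).
    pose (Phi' := fun k : Bip AA AA =>
      (existT _ (fun b => projT1 k (g b))
        (concat (ap (projT1 k) (eta a0)) (fst (projT2 k)),
         concat (ap (projT1 k) (eta a1)) (snd (projT2 k))) : Bip BB AA)).
    refine (qinv_isequiv Phi Phi' _ _ (bid AA)).
    + intros [h [h0 h1]].
      match goal with |- Id ?u ?v => apply (@path_Bip_H funext BB AA u v (fun b : B => ap h (eps b))) end; simpl;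
        rewrite concat_1p, tau', ap_compose; reflexivity.
    + intros [k [k0 k1]].
      match goal with |- Id ?u ?v => apply (@path_Bip_H funext AA AA u v (fun x : A => ap k (eta x))) end; simpl;
        apply concat_1p.
  - pose (Psi := fun h : Bip BB AA => bcomp F h).
    pose (Psi' := fun k : Bip BB BB =>
      (existT _ (fun y => g (projT1 k y))
        (concat (ap g (fst (projT2 k))) (eta a0),
         concat (ap g (snd (projT2 k))) (eta a1)) : Bip BB AA)).
    refine (qinv_isequiv Psi Psi' _ _ (bid BB)).
    + intros [h [h0 h1]].
      match goal with |- Id ?u ?v => apply (@path_Bip_H funext BB AA u v (fun y : B => eta (h y))) end; simpl.
      * rewrite ap_compose. pose proof (natural (u := fun x => g (f x)) (v := fun x => x) eta h0) as N; simpl in N; rewrite N.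
        rewrite ap_idmap. reflexivity.
      * rewrite ap_compose. pose proof (natural (u := fun x => g (f x)) (v := fun x => x) eta h1) as N; simpl in N; rewrite N.
        rewrite ap_idmap. reflexivity.
    + intros [k [k0 k1]].
      match goal with |- Id ?u ?v => apply (@path_Bip_H funext BB BB u v (fun y : B => eps (k y))) end; simpl.
      * rewrite ap_concat, <- tau', ap_compose.
        pose proof (natural (u := fun x => f (g x)) (v := fun x => x) eps k0) as N; simpl in N; rewrite N.
        rewrite ap_idmap. reflexivity.
      * rewrite ap_concat, <- tau', ap_compose.
        pose proof (natural (u := fun x => f (g x)) (v := fun x => x) eps k1) as N; simpl in N; rewrite N.
        rewrite ap_idmap. reflexivity.
Qed.

Theorem mainTheorem7 (funext : Funext) (A B : BipType) (f : Bip A B) :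
  (isequiv (pi_map f) *
   ((isbipequiv f -> isequiv (projT1 f)) * (isequiv (projT1 f) -> isbipequiv f)))%type.
Proof.
  destruct A as [A a0 a1], B as [B b0 b1], f as [f [f0 f1]]. simpl in *.
  destruct f0, f1.
  split; [|split].
  - intro y. apply contr_sigma.
    + apply contr_bipequiv; assumption.
    + intro x. apply prop_paths. apply isequiv_prop. exact funext.
  - intro e. exact (pi_map _ e).
  - intro e. exact (projT1 (contr_bipequiv funext A a0 a1 B f e)).
Qed.
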